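(* Let $R\subseteq\mathbb N$ be a congruence-periodic sparse predicate, $d\in\mathbb N^+$, $\tilde R\subseteq^dR$, $n\in\mathbb N^+$, $\mathbf A$ an $n$-tuple of operators all $\neq_R0$, and $\Delta\in d\mathbb N$ sufficiently large. Then the formula $\phi(x;y_1,y_2):=\big(P^1_\Delta(x-y_1;\mathbf A,\tilde R)=y_2\big)$, with $|x|=1$, has a strong honest definition in $(\mathbb Z,<,+,R)$.
   Context: Let $R\subseteq\mathbb N$ be infinite, enumerated increasingly as $(r_n)$; $\sigma:R\to R$ is the successor map, $\sigma^k$ its iterate. An operator on $R$ is $z\mapsto\sum_{i=0}^ma_i\sigma^i(z)$, $a_i\in\mathbb Z$. $A=_R0$: $Az=0$ for all $z\in R$; $A>_R0$ (resp. $<_R0$): $Az>0$ (resp. $<0$) for cofinitely many $z$. $R$ sparse: every operator satisfies (S1) $A=_R0$ or $A>_R0$ or $A<_R0$; (S2) if $A>_R0$ there is $\Delta$ with $A(\sigma^\Delta z)>z$ for all $z$. Congruence-periodic: $(r_n\bmod m)$ eventually periodic for each $m\ge1$. $\tilde R\subseteq^dR$: $\tilde R=\{r_{N+dt}:t\in\mathbb N\}$ for some $N$. $\mathbf A\cdot z=\sum A_iz_i$, $\mathbf A\cdot S=\{\mathbf A\cdot z:z\in S\}$. $\tilde R^n_\Delta=\{z\in\tilde R^n:z_i\ge\sigma^\Delta z_{i+1}\ (1\le i\le n)\}$, $z_{n+1}:=\min\tilde R$. For $\mathbf A$ with entries $\neq_R0$ and $\Delta$ large enough that $z\mapsto\mathbf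 A\cdot z$ is injective on $R^n_\Delta$, $P_\Delta(x;\mathbf A,\tilde R)$ is the $z\in\tilde R^n_\Delta$ with largest $\mathbf A\cdot z$ subject to $\mathbf A\cdot z<x$ if $x>\inf\mathbf A\cdot\tilde R^n_\Delta$, and otherwise the $z\in\tilde R^n_\Delta$ minimising $\mathbf A\cdot z$; $P^1_\Delta$ is its first coordinate (an $\{<,+,R\}$-definable function). A strong honest definition for $\phi(x;y)$ in $\mathcal M=(\mathbb Z,<,+,R)$ is a formula $\psi(x;y^{(1)},\dots,y^{(k)})$ such that for every $a$ and finite $B\subseteq\mathbb Z^{|y|}$, $|B|\ge2$, there is $c\in B^k$ with $\mathcal M\models\psi(a;c)$ and for all $a'\models\psi(x;c)$ and $b\in B$: $\phi(a;b)\leftrightarrow\phi(a';b)$. ''$\Delta$ sufficiently large'' means $\Delta\ge\Delta_0$ for some suitable $\Delta_0$. *)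

(* Defs.v *)
From Stdlib Require Import ZArith List Arith.
Import ListNotations.
Open Scope Z_scope.

(** * The predicate R, given by its increasing enumeration r : nat -> nat.
    R = { r n | n in nat } is an infinite subset of N. *)
Definition strictly_increasing (r : nat -> nat) : Prop :=
  forall m n : nat, (m < n)%nat -> (r m < r n)%nat.

Definition inR (r : nat -> nat) (z : Z) : Prop := exists k : nat, Z.of_nat (r k) = z.

(** Successor map: sigma (r k) = r (k+1), hence sigma^j (r k) = r (k+j). *)

(** An operator z |-> sum_{i=0}^m a_i sigma^i(z) is given by its coefficient list
    [a_0; ...; a_m].  [op_at r a k] is its value at z = r k. *)
Fixpoint op_at (r : nat -> nat) (a : list Z) (k : nat) : Z :=
  match a with
  | [] => 0
  | c :: a' => c * Z.of_nat (r k) + op_at r a' (S k)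
  end.

Definition op_zero (r : nat -> nat) (a : list Z) : Prop :=
  forall k : nat, op_at r a k = 0.
Definition op_pos (r : nat -> nat) (a : list Z) : Prop :=
  exists K : nat, forall k : nat, (K <= k)%nat -> op_at r a k > 0.
Definition op_neg (r : nat -> nat) (a : list Z) : Prop :=
  exists K : nat, forall k : nat, (K <= k)%nat -> op_at r a k < 0.

Definition sparse (r : nat -> nat) : Prop :=
  forall a : list Z,
    (op_zero r a \/ op_pos r a \/ op_neg r a) /\
    (op_pos r a -> exists Delta : nat, forall k : nat,
        op_at r a (k + Delta)%nat > Z.of_nat (r k)).

Definition congruence_periodic (r : nat -> nat) : Prop :=
  forall m : nat, (1 <= m)%nat ->
    exists (N p : nat), (1 <= p)%nat /\
      forall n : nat, (N <= n)%nat -> (Nat.modulo (r (n + p)) m = Nat.modulo (r n) m)%nat.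

(** * R~ = { r_{N + d t} : t in N }  (R~ subset^d R), and R~^n_Delta.
    An element z of R~^n is represented by the list ks of indices with z_i = r (ks_i)
    (r is injective, so this is a bijection).  The extra coordinate
    z_{n+1} := min R~ = r N is appended. *)
Definition in_tilde_n_Delta (r : nat -> nat) (N d n Delta : nat) (ks : list nat) : Prop :=
  length ks = n /\
  (forall i : nat, (i < n)%nat -> exists t : nat, nth i ks 0%nat = (N + d * t)%nat) /\
  (forall i : nat, (i < n)%nat ->
     (r (nth i (ks ++ [N]) 0%nat) >= r (nth (S i) (ks ++ [N]) 0%nat + Delta))%nat).

Fixpoint dot (r : nat -> nat) (As : list (list Z)) (ks : list nat) : Z :=
  match As, ks with
  | a :: As', k :: ks' => op_at r a k + dot r As' ks'
  | _, _ => 0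
  end.

(** Relational rendering of the
    definition; for Delta large (injectivity of z |-> A.z) it is a functional relation.
    Note: for a set S of integers, x > inf S iff some element of S is < x. *)
Definition isP (r : nat -> nat) (N d n Delta : nat) (As : list (list Z)) (x : Z)
    (ks : list nat) : Prop :=
  in_tilde_n_Delta r N d n Delta ks /\
  ((exists ks', in_tilde_n_Delta r N d n Delta ks' /\ dot r As ks' < x) ->
     dot r As ks < x /\
     forall ks', in_tilde_n_Delta r N d n Delta ks' -> dot r As ks' < x ->
                 dot r As ks' <= dot r As ks) /\
  (~ (exists ks', in_tilde_n_Delta r N d n Delta ks' /\ dot r As ks' < x) ->
     forall ks', in_tilde_n_Delta r N d n Delta ks' -> dot r As ks <= dot r As ks').

Definition phiP (r : nat -> nat) (N d n Delta : nat) (As : list (list Z))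
    (x y1 y2 : Z) : Prop :=
  exists ks, isP r N d n Delta As (x - y1) ks /\ Z.of_nat (r (nth 0 ks 0%nat)) = y2.

Inductive term : Type :=
  | TVar : nat -> term
  | TPlus : term -> term -> term.

Inductive form : Type :=
  | FLt : term -> term -> form
  | FEq : term -> term -> form
  | FR : term -> form
  | FNot : form -> form
  | FAnd : form -> form -> form
  | FEx : nat -> form -> form.

Fixpoint eval_term (e : nat -> Z) (t : term) : Z :=
  match t with
  | TVar i => e i
  | TPlus t1 t2 => eval_term e t1 + eval_term e t2
  end.

Definition update (e : nat -> Z) (i : nat) (v : Z) : nat -> Z :=
  fun j => if Nat.eqb j i then v else e j.

Fixpoint sat (r : nat -> nat) (e : nat -> Z) (f : form) : Prop :=
  match f with
  | FLt t1 t2 => eval_term e t1 < eval_term e t2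
  | FEq t1 t2 => eval_term e t1 = eval_term e t2
  | FR t => inR r (eval_term e t)
  | FNot f1 => ~ sat r e f1
  | FAnd f1 f2 => sat r e f1 /\ sat r e f2
  | FEx i f1 => exists v : Z, sat r (update e i v) f1
  end.

(** Assignment for psi(x; y^(1), ..., y^(k)) with |x| = 1, |y^(j)| = 2:
    variable 0 is x, variables 2j+1, 2j+2 are the two coordinates of y^(j+1)
    (j < k); all other variables are assigned 0 (0 is 0-definable, so this is
    harmless). *)
Definition env (a : Z) (c : list (Z * Z)) : nat -> Z :=
  fun i => match i with
           | O => a
           | S i' => match nth_error c (Nat.div i' 2) with
                     | Some (y1, y2) => if Nat.eqb (Nat.modulo i' 2) 0 then y1 else y2
                     | None => 0
                     end
           end.

Definition has_strong_honest_def (r : nat -> nat) (phi : Z -> Z -> Z -> Prop) : Prop :=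
  exists (k : nat) (psi : form),
    forall (a : Z) (B : list (Z * Z)),
      NoDup B -> (2 <= length B)%nat ->
      exists c : list (Z * Z),
        length c = k /\ (forall y, In y c -> In y B) /\
        sat r (env a c) psi /\
        forall a' : Z, sat r (env a' c) psi ->
          forall b : Z * Z, In b B -> (phi a (fst b) (snd b) <-> phi a' (fst b) (snd b)).

(* Main.v *)
Require Import Defs.
From Stdlib Require Import ZArith List Arith.
From Stdlib Require Import Lia Classical.
Import ListNotations.
Open Scope Z_scope.

Lemma sinc_lt (r : nat -> nat) : strictly_increasing r ->
  forall a b, (r a < r b)%nat <-> (a < b)%nat.
Proof.
  intros H a b; split; intro h.
  - destruct (Nat.lt_ge_cases a b) as [h1|h1]; auto.
    destruct (Nat.eq_dec a b); [subst; lia|].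
    assert (r b < r a)%nat by (apply H; lia). lia.
  - apply H; auto.
Qed.

Lemma sinc_le (r : nat -> nat) : strictly_increasing r ->
  forall a b, (r a <= r b)%nat <-> (a <= b)%nat.
Proof.
  intros H a b. pose proof (sinc_lt r H b a). lia.
Qed.

Lemma sinc_inj (r : nat -> nat) : strictly_increasing r ->
  forall a b, r a = r b -> a = b.
Proof.
  intros H a b e. pose proof (sinc_lt r H a b). pose proof (sinc_lt r H b a). lia.
Qed.

Lemma update_eq e i v : update e i v i = v.
Proof. unfold update. now rewrite Nat.eqb_refl. Qed.
Lemma update_neq e i v j : j <> i -> update e i v j = e j.
Proof. intros h. unfold update. destruct (Nat.eqb_spec j i); congruence. Qed.

Fixpoint tlt (m : nat) (t : term) : Prop :=
  match t with TVar i => (i < m)%nat | TPlus a b => tlt m a /\ tlt m b end.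

Lemma eval_ext e e' m t : tlt m t -> (forall i, (i < m)%nat -> e i = e' i) ->
  eval_term e t = eval_term e' t.
Proof.
  induction t; simpl; intros h H.
  - apply H; auto.
  - destruct h. rewrite IHt1, IHt2; auto.
Qed.

Lemma tlt_mono m m' t : (m <= m')%nat -> tlt m t -> tlt m' t.
Proof. induction t; simpl; intuition lia. Qed.

Lemma eval_upd e m v t : tlt m t -> eval_term (update e m v) t = eval_term e t.
Proof. intros h. apply (eval_ext _ _ m); auto. intros i hi. apply update_neq. lia. Qed.

Fixpoint addcp (n : nat) (w : nat) (t : term) : term :=
  match n with O => t | S n' => TPlus (addcp n' w t) (TVar w) end.
Lemma eval_addcp e n w t : eval_term e (addcp n w t) = eval_term e t + Z.of_nat n * e w.
Proof. induction n; cbn [addcp eval_term]; [lia|]. rewrite IHn, Nat2Z.inj_succ. ring. Qed.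
Lemma tlt_addcp m n w t : (w < m)%nat -> tlt m t -> tlt m (addcp n w t).
Proof. intros; induction n; simpl; auto. Qed.

Definition addL (c : Z) w t := addcp (Z.to_nat c) w t.
Definition addR (c : Z) w t := addcp (Z.to_nat (- c)) w t.

Definition SuccF (y z b : nat) : form :=
  FAnd (FR (TVar y)) (FAnd (FR (TVar z)) (FAnd (FLt (TVar y) (TVar z))
   (FNot (FEx b (FAnd (FR (TVar b)) (FAnd (FLt (TVar y) (TVar b)) (FLt (TVar b) (TVar z)))))))).

Lemma SuccF_sem r (Hr : strictly_increasing r) e y z b :
  (y < b)%nat -> (z < b)%nat ->
  (sat r e (SuccF y z b) <-> exists k : nat, e y = Z.of_nat (r k) /\ e z = Z.of_nat (r (S k))).
Proof.
  intros hy hz. unfold SuccF; simpl.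
  split.
  - intros [[k ey] [[j hj] [hlt hn]]]. exists k. split; auto.
    rewrite <- hj in *. rewrite <- ey in hlt.
    assert (k < j)%nat by (apply (sinc_lt r Hr); lia).
    destruct (Nat.eq_dec j (S k)); [subst; auto|].
    exfalso. apply hn. exists (Z.of_nat (r (S k))).
    rewrite !update_eq, !update_neq by lia.
    split; [exists (S k); auto|].
    rewrite <- ey, <- hj. split.
    + assert (r k < r (S k))%nat by (apply Hr; lia). lia.
    + assert (r (S k) < r j)%nat by (apply Hr; lia). lia.
  - intros [k [ey ez]]. split; [exists k; auto|]. split; [exists (S k); auto|].
    rewrite ez, ey. split.
    + assert (r k < r (S k))%nat by (apply Hr; lia). lia.
    + intros [v [[j hj] [h1 h2]]].
      rewrite !update_eq, !update_neq in * by lia.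
      rewrite ez, ey in *. subst v.
      assert (k < j)%nat by (apply (sinc_lt r Hr); lia).
      assert (j < S k)%nat by (apply (sinc_lt r Hr); lia). lia.
Qed.

Fixpoint IterF (j : nat) (y z b : nat) : form :=
  match j with
  | O => FAnd (FR (TVar y)) (FEq (TVar y) (TVar z))
  | S j' => FEx b (FAnd (SuccF y b (S b)) (IterF j' b z (S b)))
  end.

Lemma IterF_sem r (Hr : strictly_increasing r) j : forall e y z b,
  (y < b)%nat -> (z < b)%nat ->
  (sat r e (IterF j y z b) <-> exists k : nat, e y = Z.of_nat (r k) /\ e z = Z.of_nat (r (k + j)%nat)).
Proof.
  induction j; intros e y z b hy hz; cbn -[SuccF].
  - split.
    + intros [[k hk] he]. exists k. rewrite Nat.add_0_r. split; congruence.
    + intros [k [h1 h2]]. rewrite Nat.add_0_r in h2. split; [exists k; auto|congruence].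
  - split.
    + intros [v [h1 h2]].
      apply IHj in h2; try lia.
      rewrite (SuccF_sem r Hr _ _ _ _) in h1 by lia.
      destruct h2 as [k [hk1 hk2]]. destruct h1 as [k' [h1 h1']].
      rewrite update_eq in hk1, h1'. rewrite update_neq in hk2, h1 by lia.
      rewrite hk1 in h1'. apply Nat2Z.inj in h1'. apply (sinc_inj r Hr) in h1'. subst k.
      exists k'. split; auto. rewrite hk2. f_equal. f_equal. lia.
    + intros [k [h1 h2]]. exists (Z.of_nat (r (S k))). split.
      * rewrite (SuccF_sem r Hr _ _ _ _) by lia. exists k. rewrite update_eq, update_neq by lia. auto.
      * rewrite IHj by lia. exists (S k). rewrite update_eq, update_neq by lia.
        split; auto. rewrite h2. now replace (S k + j)%nat with (k + S j)%nat by lia.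
Qed.

Ltac su := repeat match goal with
 | H : context [update ?e ?i ?v ?i] |- _ => rewrite (update_eq e i v) in H
 | |- context [update ?e ?i ?v ?i] => rewrite (update_eq e i v)
 | H : context [update ?e ?i ?v ?j] |- _ => rewrite (update_neq e i v j) in H by lia
 | |- context [update ?e ?i ?v ?j] => rewrite (update_neq e i v j) by lia
 end.

Lemma posneg_split (L R c x y : Z) :
  L + Z.of_nat (Z.to_nat c) * x - (R + Z.of_nat (Z.to_nat (- c)) * x) + y = L - R + (c * x + y).
Proof.
  assert (H : Z.of_nat (Z.to_nat c) - Z.of_nat (Z.to_nat (- c)) = c) by lia.
  rewrite <- H at 3. ring.
Qed.

Definition MinR (x b : nat) : form :=
  FAnd (FR (TVar x)) (FNot (FEx b (FAnd (FR (TVar b)) (FLt (TVar b) (TVar x))))).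

Lemma MinR_sem r (Hr : strictly_increasing r) e x b : (x < b)%nat ->
  (sat r e (MinR x b) <-> e x = Z.of_nat (r 0%nat)).
Proof.
  intros hx. unfold MinR; cbn -[update]. split.
  - intros [[k hk] hn]. destruct k; [auto|]. exfalso. apply hn. exists (Z.of_nat (r 0%nat)).
    rewrite update_eq, update_neq by lia. split; [exists 0%nat; auto|].
    rewrite <- hk. assert (r 0 < r (S k))%nat by (apply Hr; lia). lia.
  - intros h. split; [exists 0%nat; auto|]. intros [v [[j hj] hl]].
    rewrite update_eq, update_neq in * by lia. subst v. rewrite h in hl.
    destruct j. lia. assert (r 0 < r (S j))%nat by (apply Hr; lia). lia.
Qed.

Definition LastF (L : nat) (v m : nat) : form :=
  FEx m (FEx (S m) (FAnd (MinR m (S (S m))) (FAnd (IterF L m (S m) (S (S m)))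
     (FNot (FLt (TVar v) (TVar (S m))))))).

Lemma LastF_sem r (Hr : strictly_increasing r) L e v m : (v < m)%nat ->
  (sat r e (LastF L v m) <-> Z.of_nat (r L) <= e v).
Proof.
  intros hv. unfold LastF. cbn -[MinR IterF update]. split.
  - intros [x [y [h1 [h2 h3]]]].
    rewrite (MinR_sem r Hr _ _ _) in h1 by lia.
    rewrite (IterF_sem r Hr _ _ _ _ _) in h2 by lia.
    su. destruct h2 as [k [hk1 hk2]].
    rewrite h1 in hk1. apply Nat2Z.inj, (sinc_inj r Hr) in hk1. subst k. simpl in hk2. lia.
  - intros h. exists (Z.of_nat (r 0%nat)), (Z.of_nat (r L)). split; [|split].
    + rewrite (MinR_sem r Hr _ _ _) by lia. su. auto.
    + rewrite (IterF_sem r Hr _ _ _ _ _) by lia. exists 0%nat. su. auto.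
    + cbn. su. lia.
Qed.

Fixpoint Op (a : list Z) (w : nat) (Lt Rt : term) (m : nat) (K : term -> term -> nat -> form) : form :=
  match a with
  | [] => K Lt Rt m
  | c :: a' => FEx m (FAnd (SuccF w m (S m)) (Op a' m (addL c w Lt) (addR c w Rt) (S m) K))
  end.

Lemma Op_sem r (Hr : strictly_increasing r) (K : term -> term -> nat -> form) (KS : Z -> Prop)
  (e0 : nat -> Z) (m0 : nat) :
  (forall e Lt Rt m, (m0 <= m)%nat -> tlt m Lt -> tlt m Rt -> (forall i, (i < m0)%nat -> e i = e0 i) ->
     (sat r e (K Lt Rt m) <-> KS (eval_term e Lt - eval_term e Rt))) ->
  forall a w m e Lt Rt j, (m0 <= m)%nat -> (w < m)%nat -> tlt m Lt -> tlt m Rt ->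
   (forall i, (i < m0)%nat -> e i = e0 i) -> e w = Z.of_nat (r j) ->
   (sat r e (Op a w Lt Rt m K) <-> KS (eval_term e Lt - eval_term e Rt + op_at r a j)).
Proof.
  intros HK a. induction a as [|c a IH]; intros w m e Lt Rt j hm hw hL hR he hj.
  - simpl. rewrite HK by auto. now rewrite Z.add_0_r.
  - cbn [Op sat]. split.
    + intros [v [h1 h2]].
      rewrite (SuccF_sem r Hr _ _ _ _) in h1 by lia.
      destruct h1 as [k [hk1 hk2]].
      rewrite update_neq, hj in hk1 by lia. apply Nat2Z.inj, (sinc_inj r Hr) in hk1. subst k.
      rewrite update_eq in hk2.
      rewrite (IH m (S m) (update e m v) _ _ (S j)) in h2.
      * unfold addL, addR in h2. rewrite !eval_addcp, !eval_upd in h2 by auto.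
        su. rewrite hj in *.
        simpl. rewrite posneg_split in h2. auto.
      * lia.
      * lia.
      * unfold addL. apply tlt_addcp; [lia|]. apply (tlt_mono m); auto.
      * unfold addR. apply tlt_addcp; [lia|]. apply (tlt_mono m); auto.
      * intros i hi. rewrite update_neq by lia. auto.
      * rewrite update_eq; auto.
    + intros h. exists (Z.of_nat (r (S j))). split.
      * rewrite (SuccF_sem r Hr _ _ _ _) by lia. exists j. rewrite update_eq, update_neq by lia. auto.
      * rewrite (IH m (S m) (update e m _) _ _ (S j)).
        -- unfold addL, addR. rewrite !eval_addcp, !eval_upd by auto.
           su. rewrite hj in *. simpl in h.
           rewrite posneg_split. auto.
        -- lia.
        -- lia.
        -- unfold addL. apply tlt_addcp; [lia|]. apply (tlt_mono m); auto.
        -- unfold addR. apply tlt_addcp; [lia|]. apply (tlt_mono m); auto.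
        -- intros i hi. rewrite update_neq by lia. auto.
        -- rewrite update_eq; auto.
Qed.

Fixpoint okc (D N : nat) (ks : list nat) : Prop :=
  match ks with
  | [] => True
  | k :: t => match t with [] => (N + D <= k)%nat | k2 :: _ => (k2 + D <= k)%nat /\ okc D N t end
  end.

Fixpoint G (D N : nat) (As : list (list Z)) (v : nat) (Lt Rt : term) (m : nat) : form :=
  match As with
  | [] => FLt Lt Rt
  | a :: As' => Op a v Lt Rt m (fun Lt' Rt' m' =>
       match As' with
       | [] => FAnd (LastF (N + D) v m') (FLt Lt' Rt')
       | _ => FEx m' (FEx (S m') (FAnd (IterF D m' (S m') (S (S m')))
                (FAnd (FNot (FLt (TVar v) (TVar (S m')))) (G D N As' m' Lt' Rt' (S (S m'))))))
       end)
  end.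

Lemma G_sem r (Hr : strictly_increasing r) D N As : As <> [] ->
  forall e v Lt Rt m k0, (v < m)%nat -> tlt m Lt -> tlt m Rt -> e v = Z.of_nat (r k0) ->
  (sat r e (G D N As v Lt Rt m) <->
   exists ks, okc D N ks /\ length ks = length As /\ nth 0 ks 0%nat = k0 /\
              eval_term e Lt + dot r As ks < eval_term e Rt).
Proof.
  induction As as [|a As IH]; [congruence|]. intros _ e v Lt Rt m k0 hv hL hR hk0.
  destruct As as [|a2 As2].
  - cbn [G].
    assert (HK : forall e' Lt' Rt' m', (m <= m')%nat -> tlt m' Lt' -> tlt m' Rt' ->
       (forall i, (i < m)%nat -> e' i = e i) ->
       (sat r e' (FAnd (LastF (N + D) v m') (FLt Lt' Rt')) <->
        (fun X => (N + D <= k0)%nat /\ X < 0) (eval_term e' Lt' - eval_term e' Rt'))).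
    { intros e' Lt' Rt' m' hm hL' hR' he. cbn -[LastF].
      rewrite (LastF_sem r Hr _ _ _ _) by lia. rewrite he, hk0 by lia.
      rewrite <- Nat2Z.inj_le, (sinc_le r Hr). split; intros [? ?]; split; auto; lia. }
    rewrite (Op_sem r Hr _ _ e m HK a v m e Lt Rt k0); auto.
    split.
    + intros [h1 h2]. exists [k0]. simpl. repeat split; auto. lia.
    + intros [ks [h1 [h2 [h3 h4]]]]. destruct ks as [|k [|k' ks]]; simpl in *; try discriminate.
      subst k. split; auto. lia.
  - set (As := a2 :: As2) in *.
    assert (HA : As <> []) by discriminate.
    cbn [G]. fold As.
    assert (HK : forall e' Lt' Rt' m', (m <= m')%nat -> tlt m' Lt' -> tlt m' Rt' ->
       (forall i, (i < m)%nat -> e' i = e i) ->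
       (sat r e' (FEx m' (FEx (S m') (FAnd (IterF D m' (S m') (S (S m')))
                (FAnd (FNot (FLt (TVar v) (TVar (S m')))) (G D N As m' Lt' Rt' (S (S m'))))))) <->
        (fun X => exists ks', okc D N ks' /\ length ks' = length As /\
              (nth 0 ks' 0%nat + D <= k0)%nat /\ X + dot r As ks' < 0)
        (eval_term e' Lt' - eval_term e' Rt'))).
    { intros e' Lt' Rt' m' hm hL' hR' he.
      cbn -[IterF G update dot]. split.
      * intros [x [y [h1 [h2 h3]]]].
        rewrite (IterF_sem r Hr _ _ _ _ _) in h1 by lia.
        destruct h1 as [k1 [hx hy]]. su.
        rewrite (IH HA _ m' _ _ _ k1) in h3.
        -- destruct h3 as [ks' [g1 [g2 [g3 g4]]]]. exists ks'. repeat split; auto.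
           ++ rewrite he, hk0, hy in h2 by lia. rewrite g3.
              assert (~ (r k0 < r (k1 + D))%nat) by lia.
              rewrite (sinc_lt r Hr) in H. lia.
           ++ rewrite !eval_upd in g4 by (apply (tlt_mono m'); auto). lia.
        -- lia.
        -- apply (tlt_mono m'); auto.
        -- apply (tlt_mono m'); auto.
        -- su. auto.
      * intros [ks' [g1 [g2 [g3 g4]]]].
        set (k1 := nth 0 ks' 0%nat) in *.
        exists (Z.of_nat (r k1)), (Z.of_nat (r (k1 + D)%nat)). split; [|split].
        -- rewrite (IterF_sem r Hr _ _ _ _ _) by lia. exists k1. su. auto.
        -- su. rewrite he, hk0 by lia.
           assert (~ (r k0 < r (k1 + D))%nat) by (rewrite (sinc_lt r Hr); lia). lia.
        -- rewrite (IH HA _ m' _ _ _ k1).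
           ++ exists ks'. repeat split; auto.
              rewrite !eval_upd by (apply (tlt_mono m'); auto). lia.
           ++ lia.
           ++ apply (tlt_mono m'); auto.
           ++ apply (tlt_mono m'); auto.
           ++ su. auto. }
    eapply iff_trans; [exact (Op_sem r Hr _ _ e m HK a v m e Lt Rt k0 (le_n _) hv hL hR (fun _ _ => eq_refl) hk0)|].
    split.
    + intros [ks' [h1 [h2 [h3 h4]]]]. exists (k0 :: ks'). cbn [okc length nth dot].
      destruct ks' as [|k1 ks'']; [simpl in h2; subst As; discriminate|].
      simpl in h3. repeat split; auto. lia.
    + intros [ks [h1 [h2 [h3 h4]]]]. destruct ks as [|k ks']; simpl in h2; try discriminate.
      simpl in h3. subst k. exists ks'.
      destruct ks' as [|k1 ks'']; [subst As; simpl in h2; discriminate|].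
      simpl in h1. destruct h1 as [h1 h1']. repeat split; auto; unfold As in *; simpl in *; lia.
Qed.

Definition RelS r D N As (h : nat) (c1 x : Z) : Prop :=
  exists ks, okc D N ks /\ length ks = length As /\ nth 0 ks 0%nat = h /\ c1 + dot r As ks < x.

Definition QP D N As j (vx vc1 vc2 b : nat) : form :=
  FEx b (FAnd (IterF j vc2 b (S b)) (G D N As b (TVar vc1) (TVar vx) (S b))).
Definition QM D N As j (vx vc1 vc2 b : nat) : form :=
  FEx b (FAnd (IterF j b vc2 (S b)) (G D N As b (TVar vc1) (TVar vx) (S b))).

Lemma QP_sem r (Hr : strictly_increasing r) D N As j e vx vc1 vc2 b : As <> [] ->
  (vx < b)%nat -> (vc1 < b)%nat -> (vc2 < b)%nat ->
  (sat r e (QP D N As j vx vc1 vc2 b) <->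
   exists k, e vc2 = Z.of_nat (r k) /\ RelS r D N As (k + j) (e vc1) (e vx)).
Proof.
  intros HA h1 h2 h3. unfold QP. cbn -[IterF G update]. split.
  - intros [v [g1 g2]]. rewrite (IterF_sem r Hr _ _ _ _ _) in g1 by lia.
    destruct g1 as [k [gk1 gk2]]. su. exists k. split; auto.
    rewrite (G_sem r Hr D N As HA _ _ _ _ _ (k + j)) in g2 by (simpl; try lia; su; auto). unfold RelS. cbn [eval_term] in g2. su. exact g2.
  - intros [k [g1 g2]]. exists (Z.of_nat (r (k + j)%nat)). split.
    + rewrite (IterF_sem r Hr _ _ _ _ _) by lia. exists k. su. auto.
    + rewrite (G_sem r Hr D N As HA _ _ _ _ _ (k + j)) by (simpl; try lia; su; auto). unfold RelS in g2. cbn [eval_term]. su. exact g2.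
Qed.

Lemma QM_sem r (Hr : strictly_increasing r) D N As j e vx vc1 vc2 b : As <> [] ->
  (vx < b)%nat -> (vc1 < b)%nat -> (vc2 < b)%nat ->
  (sat r e (QM D N As j vx vc1 vc2 b) <->
   exists k, e vc2 = Z.of_nat (r (k + j)%nat) /\ RelS r D N As k (e vc1) (e vx)).
Proof.
  intros HA h1 h2 h3. unfold QM. cbn -[IterF G update]. split.
  - intros [v [g1 g2]]. rewrite (IterF_sem r Hr _ _ _ _ _) in g1 by lia.
    destruct g1 as [k [gk1 gk2]]. su. exists k. split; auto.
    rewrite (G_sem r Hr D N As HA _ _ _ _ _ k) in g2 by (simpl; try lia; su; auto). unfold RelS. cbn [eval_term] in g2. su. exact g2.
  - intros [k [g1 g2]]. exists (Z.of_nat (r k)). split.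
    + rewrite (IterF_sem r Hr _ _ _ _ _) by lia. exists k. su. auto.
    + rewrite (G_sem r Hr D N As HA _ _ _ _ _ k) by (simpl; try lia; su; auto). unfold RelS in g2. cbn [eval_term]. su. exact g2.
Qed.

Definition vf (i : nat) : nat := (2 * i + 1)%nat.
Definition vs (i : nat) : nat := (2 * i + 2)%nat.

Lemma env_vf a c i : (i < length c)%nat -> env a c (vf i) = fst (nth i c (0,0)).
Proof.
  intros h. unfold env, vf. replace (2 * i + 1)%nat with (S (2 * i)) by lia.
  replace (Nat.div (2 * i) 2) with i by (rewrite Nat.mul_comm, Nat.div_mul; lia).
  replace (Nat.modulo (2 * i) 2) with 0%nat by (rewrite Nat.mul_comm, Nat.Div0.mod_mul; lia).
  simpl. destruct (nth_error c i) eqn:E.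
  - rewrite (nth_error_nth _ _ _ E). destruct p; auto.
  - apply nth_error_None in E. lia.
Qed.

Lemma env_vs a c i : (i < length c)%nat -> env a c (vs i) = snd (nth i c (0,0)).
Proof.
  intros h. unfold env, vs. replace (2 * i + 2)%nat with (S (2 * i + 1)) by lia.
  replace (Nat.div (2 * i + 1) 2) with i.
  2:{ apply (Nat.div_unique _ _ _ 1%nat); lia. }
  replace (Nat.modulo (2 * i + 1) 2) with 1%nat.
  2:{ apply (Nat.mod_unique _ _ i); lia. }
  simpl. destruct (nth_error c i) eqn:E.
  - rewrite (nth_error_nth _ _ _ E). destruct p; auto.
  - apply nth_error_None in E. lia.
Qed.

Definition eqP (i j : nat) : form :=
  FAnd (FEq (TVar (vf i)) (TVar (vf j))) (FEq (TVar (vs i)) (TVar (vs j))).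

Definition pairF (q : nat -> nat -> nat -> nat -> form) (off : nat) : form :=
  FAnd (FNot (FAnd (eqP (off + 1) (off + 2)) (FNot (q 0%nat (vf off) (vs off) 40%nat))))
       (FNot (FAnd (eqP (off + 4) (off + 5)) (q 0%nat (vf (off + 3)) (vs (off + 3)) 40%nat))).

Definition nthp (c : list (Z * Z)) i := nth i c (0, 0).

Definition pairSem (S : Z -> Z -> Z -> Prop) (x : Z) (c : list (Z * Z)) (off : nat) : Prop :=
  (nthp c (off + 1) = nthp c (off + 2) -> S x (fst (nthp c off)) (snd (nthp c off))) /\
  (nthp c (off + 4) = nthp c (off + 5) -> ~ S x (fst (nthp c (off + 3))) (snd (nthp c (off + 3)))).

Lemma pair_eq_iff (p q : Z * Z) : p = q <-> fst p = fst q /\ snd p = snd q.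
Proof. destruct p, q; simpl; split; [intros h; inversion h; auto|intros [-> ->]; auto]. Qed.

Lemma pairF_sem r q S (HS : forall e vx vc1 vc2 b, (vx < b)%nat -> (vc1 < b)%nat -> (vc2 < b)%nat ->
      (sat r e (q vx vc1 vc2 b) <-> S (e vx) (e vc1) (e vc2)))
  a c off : (off + 6 <= length c)%nat -> (off <= 12)%nat ->
  (sat r (env a c) (pairF q off) <-> pairSem S a c off).
Proof.
  intros hl ho. unfold pairF, pairSem, eqP, nthp. cbn -[env vf vs].
  rewrite (HS _ _ _ _ _) by (unfold vf, vs; lia).
  rewrite (HS _ _ _ _ _) by (unfold vf, vs; lia).
  rewrite !env_vf, !env_vs by lia.
  replace (env a c 0%nat) with a by reflexivity.
  rewrite !(pair_eq_iff (nth _ c _)).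
  split; intros [h1 h2]; split;
    [intros h3; apply NNPP; intros h4; apply h1; auto | intros h3 h4; apply h2; auto
    | intros [h3 h4]; apply h4; apply h1; auto | intros [h3 h4]; apply (h2 h3 h4)].
Qed.

Lemma select_min {T} (le : T -> T -> Prop) (P : T -> Prop)
  (tot : forall x y, le x y \/ le y x) (trans : forall x y z, le x y -> le y z -> le x z)
  (refl : forall x, le x x) :
  forall l, (exists b, In b l /\ P b) -> exists b, In b l /\ P b /\ forall b', In b' l -> P b' -> le b b'.
Proof.
  induction l as [|x l IH]; intros [b [hb hp]]; [destruct hb|].
  destruct (classic (exists b, In b l /\ P b)) as [E|NE].
  - destruct (IH E) as [m [hm [hpm hmin]]].
    destruct (classic (P x)) as [px|npx].
    + destruct (tot x m) as [h|h].
      * exists x. split; [left; auto|]. split; auto. intros b' [<-|hb'] hp'; auto.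
        apply (trans _ m); auto.
      * exists m. split; [right; auto|]. split; auto. intros b' [<-|hb'] hp'; auto.
    + exists m. split; [right; auto|]. split; auto. intros b' [<-|hb'] hp'; auto. contradiction.
  - destruct hb as [<-|hb]; [|exfalso; apply NE; eauto].
    exists x. split; [left; auto|]. split; auto. intros b' [<-|hb'] hp'; auto.
    exfalso; apply NE; eauto.
Qed.

Lemma pair_choice (S : Z -> Z -> Z -> Prop)
  (Hup : forall x x' b1 b2, x <= x' -> S x b1 b2 -> S x' b1 b2)
  a B : NoDup B -> (2 <= length B)%nat ->
  exists c6, length c6 = 6%nat /\ (forall y, In y c6 -> In y B) /\ pairSem S a c6 0 /\
    forall a', pairSem S a' c6 0 -> forall b, In b B -> (S a (fst b) (snd b) <-> S a' (fst b) (snd b)).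
Proof.
  intros ND LB.
  destruct B as [|b0 [|b1 B']]; simpl in LB; try lia.
  assert (D01 : b0 <> b1) by (inversion ND; intros <-; apply H1; left; auto).
  set (B := b0 :: b1 :: B') in *.
  set (le := fun p q : Z * Z => forall x, S x (fst p) (snd p) -> S x (fst q) (snd q)).
  assert (tot : forall p q, le p q \/ le q p).
  { intros p q. destruct (classic (le p q)) as [h|h]; auto. right. intros x hx.
    apply NNPP; intros hn. apply h. intros y hy.
    destruct (Z_le_gt_dec x y). apply (Hup x); auto. exfalso. apply hn. apply (Hup y); auto; lia. }
  assert (trans : forall p q s, le p q -> le q s -> le p s) by (unfold le; auto).
  assert (refl : forall p, le p p) by (unfold le; auto).
  assert (HL : exists l3 : list (Z * Z), length l3 = 3%nat /\ (forall y, In y l3 -> In y B) /\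
     (nthp l3 1 = nthp l3 2 -> S a (fst (nthp l3 0)) (snd (nthp l3 0))) /\
     forall a', (nthp l3 1 = nthp l3 2 -> S a' (fst (nthp l3 0)) (snd (nthp l3 0))) ->
       forall b, In b B -> S a (fst b) (snd b) -> S a' (fst b) (snd b)).
  { destruct (classic (exists b, In b B /\ S a (fst b) (snd b))) as [E|NE].
    - destruct (select_min le (fun b => S a (fst b) (snd b)) tot trans refl B E) as [m [hm [hp hmin]]].
      exists [m; m; m]. split; auto. split; [simpl; intros y [<-|[<-|[<-|[]]]]; auto|].
      split; [intros _; exact hp|]. intros a' h b hb hab. apply (hmin b hb hab). apply h. reflexivity.
    - exists [b0; b0; b1]. split; auto. split.
      + simpl; intros y [<-|[<-|[<-|[]]]]; unfold B; simpl; auto.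
      + split; [intros h; exfalso; apply D01; exact h|]. intros a' _ b hb hab. exfalso; eauto. }
  assert (HU : exists l3 : list (Z * Z), length l3 = 3%nat /\ (forall y, In y l3 -> In y B) /\
     (nthp l3 1 = nthp l3 2 -> ~ S a (fst (nthp l3 0)) (snd (nthp l3 0))) /\
     forall a', (nthp l3 1 = nthp l3 2 -> ~ S a' (fst (nthp l3 0)) (snd (nthp l3 0))) ->
       forall b, In b B -> S a' (fst b) (snd b) -> S a (fst b) (snd b)).
  { destruct (classic (exists b, In b B /\ ~ S a (fst b) (snd b))) as [E|NE].
    - destruct (select_min (fun p q => le q p) (fun b => ~ S a (fst b) (snd b))
                 (fun x y => tot y x) (fun x y z h1 h2 => trans _ _ _ h2 h1) refl B E)
        as [m [hm [hp hmin]]].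
      exists [m; m; m]. split; auto. split; [simpl; intros y [<-|[<-|[<-|[]]]]; auto|].
      split; [intros _; exact hp|]. intros a' h b hb hab. apply NNPP. intros hn.
      apply (h eq_refl). apply (hmin b hb hn). exact hab.
    - exists [b0; b0; b1]. split; auto. split.
      + simpl; intros y [<-|[<-|[<-|[]]]]; unfold B; simpl; auto.
      + split; [intros h; exfalso; apply D01; exact h|]. intros a' _ b hb hab.
        apply NNPP; intros hn; eauto. }
  destruct HL as [l [ll [lin [lp lag]]]]. destruct HU as [u [ul [uin [up uag]]]].
  exists (l ++ u). split; [rewrite app_length; lia|]. split.
  { intros y hy. apply in_app_or in hy. destruct hy; auto. }
  assert (E1 : forall i, (i < 3)%nat -> nthp (l ++ u) i = nthp l i).
  { intros i hi. unfold nthp. apply app_nth1. lia. }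
  assert (E2 : forall i, (3 <= i)%nat -> nthp (l ++ u) i = nthp u (i - 3)).
  { intros i hi. unfold nthp. rewrite app_nth2 by lia. rewrite ll. auto. }
  unfold pairSem. simpl (0 + _)%nat.
  rewrite (E1 0%nat), (E1 1%nat), (E1 2%nat), (E2 3%nat), (E2 4%nat), (E2 5%nat) by lia.
  simpl (_ - _)%nat.
  split; [split; auto|].
  intros a' [h1 h2] b hb. split.
  - apply (lag a' h1 b hb).
  - apply (uag a' h2 b hb).
Qed.

Lemma pairSem_pre S x l c off : pairSem S x (l ++ c) (length l + off) <-> pairSem S x c off.
Proof.
  assert (E : forall i, nthp (l ++ c) (length l + i) = nthp c i).
  { intros i. unfold nthp. rewrite app_nth2 by lia. f_equal. lia. }
  unfold pairSem. rewrite <- !Nat.add_assoc. rewrite !E. tauto.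
Qed.

Lemma pairSem_post S x c l off : (off + 6 <= length c)%nat ->
  (pairSem S x (c ++ l) off <-> pairSem S x c off).
Proof.
  intros h. unfold pairSem, nthp. rewrite !app_nth1 by lia. tauto.
Qed.

Lemma honest3 r (phi : Z -> Z -> Z -> Prop) (q0 q1 q2 : nat -> nat -> nat -> nat -> form)
  (S0 S1 S2 : Z -> Z -> Z -> Prop) :
  (forall e vx vc1 vc2 b, (vx < b)%nat -> (vc1 < b)%nat -> (vc2 < b)%nat ->
      (sat r e (q0 vx vc1 vc2 b) <-> S0 (e vx) (e vc1) (e vc2))) ->
  (forall e vx vc1 vc2 b, (vx < b)%nat -> (vc1 < b)%nat -> (vc2 < b)%nat ->
      (sat r e (q1 vx vc1 vc2 b) <-> S1 (e vx) (e vc1) (e vc2))) ->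
  (forall e vx vc1 vc2 b, (vx < b)%nat -> (vc1 < b)%nat -> (vc2 < b)%nat ->
      (sat r e (q2 vx vc1 vc2 b) <-> S2 (e vx) (e vc1) (e vc2))) ->
  (forall x x' b1 b2, x <= x' -> S0 x b1 b2 -> S0 x' b1 b2) ->
  (forall x x' b1 b2, x <= x' -> S1 x b1 b2 -> S1 x' b1 b2) ->
  (forall x x' b1 b2, x <= x' -> S2 x b1 b2 -> S2 x' b1 b2) ->
  (forall x x' b1 b2, (S0 x b1 b2 <-> S0 x' b1 b2) -> (S1 x b1 b2 <-> S1 x' b1 b2) ->
     (S2 x b1 b2 <-> S2 x' b1 b2) -> (phi x b1 b2 <-> phi x' b1 b2)) ->
  has_strong_honest_def r phi.
Proof.
  intros H0 H1 H2 U0 U1 U2 Hdet.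
  exists 18%nat, (FAnd (pairF q0 0) (FAnd (pairF q1 6) (pairF q2 12))).
  intros a B ND LB.
  destruct (pair_choice S0 U0 a B ND LB) as [c0 [l0 [i0 [p0 g0]]]].
  destruct (pair_choice S1 U1 a B ND LB) as [c1 [l1 [i1 [p1 g1]]]].
  destruct (pair_choice S2 U2 a B ND LB) as [c2 [l2 [i2 [p2 g2]]]].
  assert (SEM : forall x, sat r (env x (c0 ++ c1 ++ c2)) (FAnd (pairF q0 0) (FAnd (pairF q1 6) (pairF q2 12)))
      <-> pairSem S0 x c0 0 /\ pairSem S1 x c1 0 /\ pairSem S2 x c2 0).
  { intros x. cbn [sat].
    rewrite (pairF_sem r q0 S0 H0), (pairF_sem r q1 S1 H1), (pairF_sem r q2 S2 H2)
      by (rewrite ?length_app; lia).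
    rewrite (pairSem_post S0 x c0 (c1 ++ c2)) by lia.
    replace 12%nat with (length (c0 ++ c1) + 0)%nat by (rewrite length_app; lia).
    rewrite (app_assoc c0 c1 c2) at 2. rewrite (pairSem_pre S2 x (c0 ++ c1) c2 0).
    replace 6%nat with (length c0 + 0)%nat by lia.
    rewrite (pairSem_pre S1 x c0 (c1 ++ c2) 0).
    rewrite (pairSem_post S1 x c1 c2) by lia. tauto. }
  exists (c0 ++ c1 ++ c2). split; [rewrite !length_app; lia|]. split.
  { intros y hy. repeat (apply in_app_or in hy; destruct hy as [hy|hy]); auto. }
  split; [apply SEM; auto|].
  intros a' ha' b hb. apply SEM in ha'. destruct ha' as [h0 [h1 h2]].
  apply Hdet; [apply (g0 a' h0 b hb)|apply (g1 a' h1 b hb)|apply (g2 a' h2 b hb)].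
Qed.

Lemma okc_nth D N ks : okc D N ks <->
  forall i, (i < length ks)%nat -> (nth (S i) (ks ++ [N]) 0 + D <= nth i (ks ++ [N]) 0)%nat.
Proof.
  induction ks as [|k t IH]; simpl.
  - split; auto. intros _ i h. lia.
  - destruct t as [|k2 t'].
    + simpl. split.
      * intros h i hi. destruct i; simpl; lia.
      * intros h. specialize (h 0%nat). simpl in h. lia.
    + split.
      * intros [h1 h2] i hi. destruct i; [simpl; lia|].
        apply IH; auto. simpl in *. lia.
      * intros h. split.
        -- specialize (h 0%nat). simpl in h. apply h. lia.
        -- apply IH. intros i hi. apply (h (S i)). simpl in *. lia.
Qed.

Lemma in_tilde_iff r (Hr : strictly_increasing r) N d n D ks :
  in_tilde_n_Delta r N d n D ks <->
  length ks = n /\ (forall i, (i < n)%nat -> exists t, nth i ks 0%nat = (N + d * t)%nat) /\ okc D N ks.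
Proof.
  unfold in_tilde_n_Delta. rewrite okc_nth. split.
  - intros [h1 [h2 h3]]. split; auto. split; auto. intros i hi.
    specialize (h3 i). rewrite <- (sinc_le r Hr). apply h3. lia.
  - intros [h1 [h2 h3]]. split; auto. split; auto. intros i hi.
    specialize (h3 i). apply (sinc_le r Hr). apply h3. lia.
Qed.

Lemma okc_head D N ks : okc D N ks -> forall m, length ks = S m ->
  (N + S m * D <= nth 0 ks 0)%nat.
Proof.
  induction ks as [|k t IH]; intros h m hl; simpl in *; [discriminate|].
  injection hl as hl. destruct t as [|k2 t']; simpl in *.
  - subst m. lia.
  - destruct h as [h1 h2]. destruct m; [discriminate|]. specialize (IH h2 m hl). simpl in IH. lia.
Qed.

Lemma okc_tail_bound D N h t : okc D N (h :: t) -> forall x, In x t -> (x + D <= h)%nat.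
Proof.
  revert h. induction t as [|k2 t IH]; intros h hc x hx; [destruct hx|].
  simpl in hc. destruct hc as [h1 h2]. destruct hx as [<-|hx]; auto.
  specialize (IH k2 h2 x hx). lia.
Qed.

Lemma okc_all D N ks : okc D N ks -> forall x, In x ks -> (N + D <= x)%nat.
Proof.
  induction ks as [|k t IH]; intros h x hx; [destruct hx|].
  destruct hx as [<-|hx].
  - pose proof (okc_head D N (k :: t) h (length t) eq_refl). simpl in H. nia.
  - apply IH; auto. destruct t; simpl in h; tauto.
Qed.

Fixpoint MinL D N (m : nat) : list nat :=
  match m with O => [] | S m' => (N + m * D)%nat :: MinL D N m' end.

Lemma MinL_len D N m : length (MinL D N m) = m.
Proof. induction m; simpl; auto. Qed.

Lemma MinL_okc D N m : okc D N (MinL D N m).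
Proof.
  induction m; simpl; auto. destruct m; simpl; [lia|]. split; [nia|]. exact IHm.
Qed.

Lemma MinL_forced D N m : forall h t, okc D N (h :: t) -> length t = m -> h = (N + S m * D)%nat ->
  h :: t = MinL D N (S m).
Proof.
  induction m; intros h t hc hl hh.
  - destruct t; [|discriminate]. simpl. rewrite hh. auto.
  - destruct t as [|k2 t']; [discriminate|]. simpl in hl. injection hl as hl.
    simpl in hc. destruct hc as [h1 h2].
    pose proof (okc_head D N (k2 :: t') h2 m ltac:(simpl; auto)). simpl in H.
    assert (k2 = (N + S m * D)%nat) by nia.
    rewrite (IHm k2 t' h2 hl H0). simpl. f_equal. lia.
Qed.

Fixpoint Opt D N (ss : list bool) (top : nat) : list nat :=
  match ss with
  | [] => []
  | s :: ss' => if s then MinL D N (S (length ss')) else (top - D)%nat :: Opt D N ss' (top - D)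
  end.

Lemma Opt_len D N ss : forall top, length (Opt D N ss top) = length ss.
Proof.
  induction ss as [|s ss IH]; intros top; simpl; auto.
  destruct s; simpl; [rewrite MinL_len; auto|rewrite IH; auto].
Qed.

Lemma Opt_okc D N ss : forall top, (N + S (length ss) * D <= top)%nat -> okc D N (top :: Opt D N ss top).
Proof.
  induction ss as [|s ss IH]; intros top h; simpl in *.
  - lia.
  - destruct s.
    + pose proof (MinL_okc D N (S (length ss))). simpl in *. split; [nia|auto].
    + split; [lia|]. apply IH. nia.
Qed.

Lemma Opt_mod D N d q ss : (D = d * q)%nat -> (1 <= d)%nat -> forall top t0,
  (N + S (length ss) * D <= top)%nat -> top = (N + d * t0)%nat ->
  forall x, In x (Opt D N ss top) -> exists t, x = (N + d * t)%nat.
Proof.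
  intros HD hd. induction ss as [|s ss IH]; intros top t0 h ht x hx; simpl in *; [destruct hx|].
  destruct s.
  - assert (G : forall m x, In x (MinL D N m) -> exists t, x = (N + d * t)%nat).
    { induction m; simpl; intros y hy; [destruct hy|]. destruct hy as [<-|hy]; auto.
      exists (S m * q)%nat. subst D. nia. }
    apply (G (S (length ss)) _ hx).
  - assert (q <= t0)%nat by (subst; nia).
    destruct hx as [<-|hx].
    + exists (t0 - q)%nat. subst. rewrite Nat.mul_sub_distr_l. nia.
    + apply (IH (top - D)%nat (t0 - q)%nat); auto.
      * nia.
      * subst. rewrite Nat.mul_sub_distr_l. nia.
Qed.

Definition sgnrel r (a : list Z) (s : bool) : Prop := if s then op_pos r a else op_neg r a.

Definition DomFor r D N (a : list Z) (Cs : list (list Z)) : Prop :=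
  forall h t h' t', okc D N (h :: t) -> okc D N (h' :: t') -> length t = length Cs ->
    length t' = length Cs -> (h' < h)%nat ->
    (op_pos r a -> dot r (a :: Cs) (h' :: t') < dot r (a :: Cs) (h :: t)) /\
    (op_neg r a -> dot r (a :: Cs) (h :: t) < dot r (a :: Cs) (h' :: t')).

Definition DomH r D N (Bs : list (list Z)) : Prop :=
  forall pre a Cs, Bs = pre ++ a :: Cs -> DomFor r D N a Cs.

Lemma DomH_tail r D N b Bs : DomH r D N (b :: Bs) -> DomH r D N Bs.
Proof. intros H pre a Cs e. apply (H (b :: pre)). rewrite e. auto. Qed.

Lemma DomH_head r D N b Bs : DomH r D N (b :: Bs) -> DomFor r D N b Bs.
Proof. intros H. apply (H []). auto. Qed.

Lemma Opt_min r D N : forall Bs ss, Forall2 (sgnrel r) Bs ss -> DomH r D N Bs ->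
  forall top t, length t = length Bs -> okc D N (top :: t) -> (N + S (length Bs) * D <= top)%nat ->
  dot r Bs (Opt D N ss top) <= dot r Bs t.
Proof.
  intros Bs ss HF. induction HF as [|b s Bs ss hs HF IH]; intros HD top t hl hc htop.
  - destruct t; simpl; lia.
  - destruct t as [|j t'']; [discriminate|]. simpl in hl. injection hl as hl.
    simpl in hc. destruct hc as [hj hc].
    pose proof (Forall2_length HF) as Hlen.
    pose proof (DomH_head _ _ _ _ _ HD) as Dm.
    cbn [Opt]. destruct s; unfold sgnrel in hs.
    + pose proof (okc_head D N (j :: t'') hc (length Bs) ltac:(simpl; auto)) as Hj. simpl in Hj.
      rewrite <- Hlen.
      destruct (Nat.eq_dec j (N + S (length Bs) * D)) as [E|E].
      * rewrite <- (MinL_forced D N (length Bs) j t'' hc hl E). lia.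
      * change (MinL D N (S (length Bs))) with ((N + S (length Bs) * D)%nat :: MinL D N (length Bs)).
        assert (Hm := MinL_okc D N (S (length Bs))).
        apply Z.lt_le_incl. apply (Dm j t'' _ _ hc Hm hl); auto.
        rewrite MinL_len; auto. lia.
    + assert (hjt : (j <= top - D)%nat) by lia.
      destruct (Nat.eq_dec j (top - D)) as [E|E].
      * subst j. cbn [dot]. apply Z.add_le_mono_l. apply IH; auto.
        -- apply (DomH_tail _ _ _ _ _ HD).
        -- simpl in htop. nia.
      * apply Z.lt_le_incl. apply (Dm _ _ j t'' (Opt_okc D N ss (top - D) ltac:(rewrite <- Hlen; simpl in htop; nia)) hc);
          auto; [rewrite Opt_len; auto|lia].
Qed.

Definition Ech D N (ss : list bool) (k : nat) : list nat := k :: Opt D N (tl ss) k.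

Definition valid N d n D (k : nat) : Prop := (exists t, k = (N + d * t)%nat) /\ (N + n * D <= k)%nat.

Lemma E_okc D N ss n k : length ss = n -> (1 <= n)%nat -> (N + n * D <= k)%nat ->
  okc D N (Ech D N ss k) /\ length (Ech D N ss k) = n.
Proof.
  intros hl hn hk. destruct ss as [|s ss']; simpl in hl; [lia|]. unfold Ech. simpl tl.
  split.
  - apply Opt_okc. nia.
  - simpl. rewrite Opt_len. auto.
Qed.

Lemma E_min r D N As ss : Forall2 (sgnrel r) As ss -> DomH r D N As -> forall k ks,
  okc D N ks -> length ks = length As -> nth 0 ks 0%nat = k -> dot r As (Ech D N ss k) <= dot r As ks.
Proof.
  intros HF HD k ks hc hl hk.
  destruct HF as [|a1 s1 As' ss' hs HF]; [destruct ks; simpl; lia|].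
  destruct ks as [|k0 t]; [discriminate|]. simpl in hk. subst k0. simpl in hl. injection hl as hl.
  unfold Ech. simpl tl. cbn [dot]. apply Z.add_le_mono_l.
  apply (Opt_min r D N As' ss' HF (DomH_tail _ _ _ _ _ HD)); auto.
  pose proof (okc_head D N (k :: t) hc (length t) eq_refl). simpl in H. rewrite hl in H. nia.
Qed.

Lemma RelS_iff r D N As ss : Forall2 (sgnrel r) As ss -> DomH r D N As -> (1 <= length As)%nat ->
  forall k c1 x, (N + length As * D <= k)%nat ->
  (RelS r D N As k c1 x <-> c1 + dot r As (Ech D N ss k) < x).
Proof.
  intros HF HD hn k c1 x hk. unfold RelS. split.
  - intros [ks [h1 [h2 [h3 h4]]]]. pose proof (E_min r D N As ss HF HD k ks h1 h2 h3). lia.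
  - intros h. exists (Ech D N ss k).
    destruct (E_okc D N ss (length As) k (eq_sym (Forall2_length HF)) hn hk). repeat split; auto.
Qed.

Lemma E_tilde r (Hr : strictly_increasing r) D N d q As ss : Forall2 (sgnrel r) As ss ->
  (1 <= length As)%nat -> D = (d * q)%nat -> (1 <= d)%nat ->
  forall k, valid N d (length As) D k -> in_tilde_n_Delta r N d (length As) D (Ech D N ss k).
Proof.
  intros HF hn HD hd k [[t0 ht0] hk].
  rewrite (in_tilde_iff r Hr).
  destruct (E_okc D N ss (length As) k (eq_sym (Forall2_length HF)) hn hk) as [h1 h2].
  split; auto. split; auto. intros i hi. destruct i as [|i]; [exists t0; auto|].
  unfold Ech. simpl nth.
  destruct ss as [|s ss']; [apply Forall2_length in HF; simpl in HF; lia|]. simpl tl.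
  apply (Opt_mod D N d q ss' HD hd k t0); auto.
  - apply Forall2_length in HF. simpl in HF. nia.
  - apply nth_In. rewrite Opt_len. apply Forall2_length in HF. simpl in HF. lia.
Qed.

Lemma tilde_valid r (Hr : strictly_increasing r) D N d n ks : (1 <= n)%nat ->
  in_tilde_n_Delta r N d n D ks -> valid N d n D (nth 0 ks 0%nat).
Proof.
  intros hn h. rewrite (in_tilde_iff r Hr) in h. destruct h as [h1 [h2 h3]]. split.
  - apply h2. lia.
  - destruct n; [lia|]. apply (okc_head D N ks h3 n h1).
Qed.

Definition Tt r N d D As (u : Z) (k : nat) : Prop :=
  exists ks, in_tilde_n_Delta r N d (length As) D ks /\ nth 0 ks 0%nat = k /\ dot r As ks < u.

Lemma T_iff r (Hr : strictly_increasing r) D N d q As ss : Forall2 (sgnrel r) As ss -> DomH r D N As ->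
  (1 <= length As)%nat -> D = (d * q)%nat -> (1 <= d)%nat ->
  forall k u, valid N d (length As) D k -> (Tt r N d D As u k <-> dot r As (Ech D N ss k) < u).
Proof.
  intros HF HDm hn HD hd k u hv. split.
  - intros [ks [h1 [h2 h3]]]. rewrite (in_tilde_iff r Hr) in h1. destruct h1 as [g1 [g2 g3]].
    pose proof (E_min r D N As ss HF HDm k ks g3 g1 h2). lia.
  - intros h. exists (Ech D N ss k). split; [|split; auto].
    apply (E_tilde r Hr D N d q As ss); auto.
Qed.

Lemma dom_full r (Hr : strictly_increasing r) D N d a1 As' ks ks' :
  DomH r D N (a1 :: As') ->
  in_tilde_n_Delta r N d (length (a1 :: As')) D ks ->
  in_tilde_n_Delta r N d (length (a1 :: As')) D ks' ->
  (nth 0 ks' 0 < nth 0 ks 0)%nat ->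
  (op_pos r a1 -> dot r (a1 :: As') ks' < dot r (a1 :: As') ks) /\
  (op_neg r a1 -> dot r (a1 :: As') ks < dot r (a1 :: As') ks').
Proof.
  intros HD h1 h2 hlt.
  rewrite (in_tilde_iff r Hr) in h1, h2. destruct h1 as [g1 [_ g3]]. destruct h2 as [f1 [_ f3]].
  destruct ks as [|h t]; [discriminate|]. destruct ks' as [|h' t']; [discriminate|].
  simpl in g1, f1, hlt. injection g1 as g1. injection f1 as f1.
  apply (DomH_head _ _ _ _ _ HD); auto.
Qed.

Lemma Zmax_exists (P : Z -> Prop) u z0 : P z0 -> (forall z, P z -> z < u) ->
  exists z, P z /\ forall z', P z' -> z' <= z.
Proof.
  intros h0 hb. remember (Z.to_nat (u - z0)) as m eqn:Em. revert z0 h0 Em.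
  induction m as [m IH] using (well_founded_induction lt_wf). intros z0 h0 Em.
  destruct (classic (exists z', P z' /\ z0 < z')) as [[z' [h1 h2]]|NE].
  - apply (IH (Z.to_nat (u - z'))) with z'; auto. pose proof (hb z' h1). pose proof (hb z0 h0). lia.
  - exists z0. split; auto. intros z' h'. apply Z.nlt_ge. intros hl. apply NE. eauto.
Qed.

Lemma Zmin_exists (P : Z -> Prop) l z0 : P z0 -> (forall z, P z -> l <= z) ->
  exists z, P z /\ forall z', P z' -> z <= z'.
Proof.
  intros h0 hb. destruct (Zmax_exists (fun z => P (- z)) (- l + 1) (- z0)) as [z [h1 h2]].
  - rewrite Z.opp_involutive. auto.
  - intros z hz. pose proof (hb _ hz). lia.
  - exists (- z). split; auto. intros z' hz'. specialize (h2 (- z')). rewrite Z.opp_involutive in h2.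
    specialize (h2 hz'). lia.
Qed.

Lemma valid_kmin N d n D q : D = (d * q)%nat -> valid N d n D (N + n * D)%nat.
Proof. intros ->. split; [exists (n * q)%nat; nia|lia]. Qed.

Lemma valid_step N d n D q k k' : D = (d * q)%nat -> (1 <= d)%nat ->
  valid N d n D k -> valid N d n D k' -> (k < k')%nat -> (k + d <= k')%nat.
Proof. intros HD hd [[t ->] _] [[t' ->] _] h. assert (t < t')%nat by nia. nia. Qed.

Lemma valid_plus N d n D k : valid N d n D k -> valid N d n D (k + d)%nat.
Proof. intros [[t ->] h]. split; [exists (S t); nia|lia]. Qed.

Lemma valid_minus N d n D q k : D = (d * q)%nat -> (1 <= d)%nat ->
  valid N d n D k -> k <> (N + n * D)%nat -> valid N d n D (k - d)%nat /\ (k - d + d = k)%nat.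
Proof.
  intros HD hd [[t ->] h] hne. assert (n * q < t)%nat by (subst; nia).
  split; [split; [exists (t - 1)%nat; rewrite Nat.mul_sub_distr_l; nia|subst; nia]|nia].
Qed.

Lemma isP_exists r (Hr : strictly_increasing r) D N d q As ss : Forall2 (sgnrel r) As ss ->
  (1 <= length As)%nat -> D = (d * q)%nat -> (1 <= d)%nat ->
  forall u, exists ks, isP r N d (length As) D As u ks.
Proof.
  intros HF hn HD hd u.
  assert (E0 := E_tilde r Hr D N d q As ss HF hn HD hd _ (valid_kmin N d (length As) D q HD)).
  destruct (classic (exists ks', in_tilde_n_Delta r N d (length As) D ks' /\ dot r As ks' < u)) as [Ex|NEx].
  - destruct Ex as [k0 [g1 g2]].
    destruct (Zmax_exists (fun z => exists ks, in_tilde_n_Delta r N d (length As) D ks /\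
        dot r As ks < u /\ dot r As ks = z) u (dot r As k0)) as [z [[ks [h1 [h2 h3]]] hmax]].
    + eauto.
    + intros z [ks [_ [h e]]]. lia.
    + exists ks. split; auto. split.
      * intros _. split; auto. intros ks' f1 f2. rewrite h3. apply hmax. eauto.
      * intros hn'. exfalso. apply hn'. eauto.
  - destruct (Zmin_exists (fun z => exists ks, in_tilde_n_Delta r N d (length As) D ks /\
        dot r As ks = z) u (dot r As (Ech D N ss (N + length As * D)))) as [z [[ks [h1 h3]] hmin]].
    + eauto.
    + intros z [ks [h1 h2]]. apply Z.nlt_ge. intros hl. apply NEx. exists ks. split; auto. lia.
    + exists ks. split; auto. split.
      * intros hh. contradiction.
      * intros _ ks' f1. rewrite h3. apply hmin. eauto.
Qed.

Definition CharP r N d D As u k : Prop :=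
  valid N d (length As) D k /\ (Tt r N d D As u k \/ k = (N + length As * D)%nat) /\
  ~ Tt r N d D As u (k + d).
Definition CharN r N d D As u k : Prop :=
  valid N d (length As) D k /\ Tt r N d D As u k /\
  (k = (N + length As * D)%nat \/ ~ Tt r N d D As u (k - d)).

Lemma E_lt r (Hr : strictly_increasing r) D N d q a1 As' ss : Forall2 (sgnrel r) (a1 :: As') ss ->
  DomH r D N (a1 :: As') -> D = (d * q)%nat -> (1 <= d)%nat -> forall k k',
  valid N d (length (a1 :: As')) D k -> valid N d (length (a1 :: As')) D k' -> (k < k')%nat ->
  (op_pos r a1 -> dot r (a1 :: As') (Ech D N ss k) < dot r (a1 :: As') (Ech D N ss k')) /\
  (op_neg r a1 -> dot r (a1 :: As') (Ech D N ss k') < dot r (a1 :: As') (Ech D N ss k)).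
Proof.
  intros HF HDm HD hd k k' hv hv' hlt.
  apply (dom_full r Hr D N d); auto.
  - apply (E_tilde r Hr D N d q _ ss); simpl; auto; lia.
  - apply (E_tilde r Hr D N d q _ ss); simpl; auto; lia.
Qed.

Lemma isP_CharP r (Hr : strictly_increasing r) D N d q a1 As' ss : Forall2 (sgnrel r) (a1 :: As') ss ->
  DomH r D N (a1 :: As') -> D = (d * q)%nat -> (1 <= d)%nat -> op_pos r a1 ->
  forall u ks, isP r N d (length (a1 :: As')) D (a1 :: As') u ks -> CharP r N d D (a1 :: As') u (nth 0 ks 0%nat).
Proof.
  intros HF HDm HD hd hpos u ks [hks [hE hNE]].
  assert (hn : (1 <= length (a1 :: As'))%nat) by (simpl; lia).
  assert (hv := tilde_valid r Hr D N d _ ks hn hks).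
  split; auto. split.
  - destruct (classic (exists ks', in_tilde_n_Delta r N d (length (a1 :: As')) D ks' /\
        dot r (a1 :: As') ks' < u)) as [Ex|NEx].
    + left. exists ks. split; auto. split; auto. apply hE; auto.
    + right. apply NNPP. intros hne.
      assert (hv0 := valid_kmin N d (length (a1 :: As')) D q HD).
      assert (Et := E_tilde r Hr D N d q _ ss HF hn HD hd _ hv0).
      specialize (hNE NEx _ Et).
      destruct hv as [_ hk].
      assert (hlt : (nth 0 (Ech D N ss (N + length (a1 :: As') * D)) 0 < nth 0 ks 0)%nat)
        by (simpl; simpl in hk, hne; lia).
      destruct (dom_full r Hr D N d a1 As' _ _ HDm hks Et hlt) as [g _]. specialize (g hpos). lia.
  - intros [ks'' [h1 [h2 h3]]].
    assert (Ex : exists ks', in_tilde_n_Delta r N d (length (a1 :: As')) D ks' /\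
        dot r (a1 :: As') ks' < u) by eauto.
    destruct (hE Ex) as [_ hmax]. specialize (hmax ks'' h1 h3).
    assert (hlt : (nth 0 ks 0 < nth 0 ks'' 0)%nat) by lia.
    destruct (dom_full r Hr D N d a1 As' _ _ HDm h1 hks hlt) as [g _]. specialize (g hpos). lia.
Qed.

Lemma CharP_unique r (Hr : strictly_increasing r) D N d q a1 As' ss : Forall2 (sgnrel r) (a1 :: As') ss ->
  DomH r D N (a1 :: As') -> D = (d * q)%nat -> (1 <= d)%nat -> op_pos r a1 ->
  forall u k k', CharP r N d D (a1 :: As') u k -> CharP r N d D (a1 :: As') u k' -> k = k'.
Proof.
  intros HF HDm HD hd hpos u.
  assert (hn : (1 <= length (a1 :: As'))%nat) by (simpl; lia).
  assert (W : forall k k', CharP r N d D (a1 :: As') u k -> CharP r N d D (a1 :: As') u k' -> ~ (k < k')%nat).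
  { intros k k' [v1 [_ n1]] [v2 [t2 _]] hlt.
    assert (hs := valid_step N d _ D q k k' HD hd v1 v2 hlt).
    assert (hkmin : k' <> (N + length (a1 :: As') * D)%nat) by (destruct v1; lia).
    destruct t2 as [t2|t2]; [|contradiction].
    apply n1. assert (vp := valid_plus N d _ D k v1).
    rewrite (T_iff r Hr D N d q _ ss HF HDm hn HD hd _ _ vp).
    rewrite (T_iff r Hr D N d q _ ss HF HDm hn HD hd _ _ v2) in t2.
    destruct (Nat.eq_dec (k + d) k') as [E|E]; [subst; auto|].
    destruct (E_lt r Hr D N d q a1 As' ss HF HDm HD hd (k + d) k' vp v2 ltac:(lia)) as [g _].
    specialize (g hpos). lia. }
  intros k k' h1 h2. destruct (Nat.lt_trichotomy k k') as [h|[h|h]]; auto.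
  - exfalso; exact (W k k' h1 h2 h).
  - exfalso; exact (W k' k h2 h1 h).
Qed.

Lemma isP_CharN r (Hr : strictly_increasing r) D N d q a1 As' ss : Forall2 (sgnrel r) (a1 :: As') ss ->
  DomH r D N (a1 :: As') -> D = (d * q)%nat -> (1 <= d)%nat -> op_neg r a1 ->
  forall u ks, isP r N d (length (a1 :: As')) D (a1 :: As') u ks -> CharN r N d D (a1 :: As') u (nth 0 ks 0%nat).
Proof.
  intros HF HDm HD hd hneg u ks [hks [hE hNE]].
  assert (hn : (1 <= length (a1 :: As'))%nat) by (simpl; lia).
  assert (hv := tilde_valid r Hr D N d _ ks hn hks).
  assert (Ex : exists ks', in_tilde_n_Delta r N d (length (a1 :: As')) D ks' /\
        dot r (a1 :: As') ks' < u).
  { apply NNPP. intros NEx.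
    assert (vp := valid_plus N d _ D _ hv).
    assert (Et := E_tilde r Hr D N d q _ ss HF hn HD hd _ vp).
    specialize (hNE NEx _ Et).
    assert (hlt : (nth 0 ks 0 < nth 0 (Ech D N ss (nth 0 ks 0 + d)) 0)%nat) by (simpl; lia).
    destruct (dom_full r Hr D N d a1 As' _ _ HDm Et hks hlt) as [_ g]. specialize (g hneg). lia. }
  destruct (hE Ex) as [hlt hmax].
  split; auto. split; [exists ks; auto|].
  destruct (classic (nth 0 ks 0%nat = (N + length (a1 :: As') * D)%nat)) as [e|ne]; [left; auto|right].
  intros [ks'' [h1 [h2 h3]]].
  specialize (hmax ks'' h1 h3).
  destruct (valid_minus N d _ D q _ HD hd hv ne) as [_ e2].
  assert (hl : (nth 0 ks'' 0 < nth 0 ks 0)%nat) by lia.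
  destruct (dom_full r Hr D N d a1 As' _ _ HDm hks h1 hl) as [_ g]. specialize (g hneg). lia.
Qed.

Lemma CharN_unique r (Hr : strictly_increasing r) D N d q a1 As' ss : Forall2 (sgnrel r) (a1 :: As') ss ->
  DomH r D N (a1 :: As') -> D = (d * q)%nat -> (1 <= d)%nat -> op_neg r a1 ->
  forall u k k', CharN r N d D (a1 :: As') u k -> CharN r N d D (a1 :: As') u k' -> k = k'.
Proof.
  intros HF HDm HD hd hneg u.
  assert (hn : (1 <= length (a1 :: As'))%nat) by (simpl; lia).
  assert (W : forall k k', CharN r N d D (a1 :: As') u k -> CharN r N d D (a1 :: As') u k' -> ~ (k < k')%nat).
  { intros k k' [v1 [t1 _]] [v2 [_ n2]] hlt.
    assert (hs := valid_step N d _ D q k k' HD hd v1 v2 hlt).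
    assert (hkmin : k' <> (N + length (a1 :: As') * D)%nat) by (destruct v1; lia).
    destruct n2 as [n2|n2]; [contradiction|].
    destruct (valid_minus N d _ D q _ HD hd v2 hkmin) as [vm em].
    apply n2.
    rewrite (T_iff r Hr D N d q _ ss HF HDm hn HD hd _ _ vm).
    rewrite (T_iff r Hr D N d q _ ss HF HDm hn HD hd _ _ v1) in t1.
    destruct (Nat.eq_dec k (k' - d)) as [E|E]; [rewrite <- E; auto|].
    destruct (E_lt r Hr D N d q a1 As' ss HF HDm HD hd k (k' - d) v1 vm ltac:(lia)) as [_ g].
    specialize (g hneg). lia. }
  intros k k' h1 h2. destruct (Nat.lt_trichotomy k k') as [h|[h|h]]; auto.
  - exfalso; exact (W k k' h1 h2 h).
  - exfalso; exact (W k' k h2 h1 h).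
Qed.

Lemma T_Rel r (Hr : strictly_increasing r) D N d q As ss : Forall2 (sgnrel r) As ss -> DomH r D N As ->
  (1 <= length As)%nat -> D = (d * q)%nat -> (1 <= d)%nat ->
  forall k x b1, valid N d (length As) D k -> (Tt r N d D As (x - b1) k <-> RelS r D N As k b1 x).
Proof.
  intros HF HDm hn HD hd k x b1 hv.
  rewrite (T_iff r Hr D N d q As ss HF HDm hn HD hd k _ hv).
  rewrite (RelS_iff r D N As ss HF HDm hn k b1 x (proj2 hv)). lia.
Qed.

Definition S0 r D N As (x b1 b2 : Z) := exists k, b2 = Z.of_nat (r k) /\ RelS r D N As (k + 0) b1 x.
Definition S1 r D N d As (x b1 b2 : Z) := exists k, b2 = Z.of_nat (r k) /\ RelS r D N As (k + d) b1 x.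
Definition S2 r D N d As (x b1 b2 : Z) := exists k, b2 = Z.of_nat (r (k + d)%nat) /\ RelS r D N As k b1 x.

Lemma phi_det_dir r (Hr : strictly_increasing r) D N d q As ss : Forall2 (sgnrel r) As ss -> DomH r D N As ->
  (1 <= length As)%nat -> D = (d * q)%nat -> (1 <= d)%nat ->
  forall x x' b1 b2, (S0 r D N As x b1 b2 <-> S0 r D N As x' b1 b2) ->
    (S1 r D N d As x b1 b2 <-> S1 r D N d As x' b1 b2) ->
    (S2 r D N d As x b1 b2 <-> S2 r D N d As x' b1 b2) ->
    phiP r N d (length As) D As x b1 b2 -> phiP r N d (length As) D As x' b1 b2.
Proof.
  intros HF HDm hn HD hd x x' b1 b2 e0 e1 e2 [ks [hP hb2]].
  set (k := nth 0 ks 0%nat) in *.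
  assert (TR := T_Rel r Hr D N d q As ss HF HDm hn HD hd).
  assert (I0 : forall y, valid N d (length As) D k -> (Tt r N d D As (y - b1) k <-> S0 r D N As y b1 b2)).
  { intros y hv. rewrite (TR k y b1 hv). unfold S0. split.
    - intros h. exists k. rewrite Nat.add_0_r. auto.
    - intros [k' [g1 g2]]. rewrite <- hb2 in g1. apply Nat2Z.inj, (sinc_inj r Hr) in g1.
      rewrite <- g1, Nat.add_0_r in g2. auto. }
  assert (I1 : forall y, valid N d (length As) D k -> (Tt r N d D As (y - b1) (k + d) <-> S1 r D N d As y b1 b2)).
  { intros y hv. rewrite (TR (k + d)%nat y b1 (valid_plus _ _ _ _ _ hv)). unfold S1. split.
    - intros h. exists k. auto.
    - intros [k' [g1 g2]]. rewrite <- hb2 in g1. apply Nat2Z.inj, (sinc_inj r Hr) in g1.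
      rewrite <- g1 in g2. auto. }
  assert (I2 : forall y, valid N d (length As) D k -> k <> (N + length As * D)%nat ->
      (Tt r N d D As (y - b1) (k - d) <-> S2 r D N d As y b1 b2)).
  { intros y hv hne. destruct (valid_minus N d _ D q k HD hd hv hne) as [vm em].
    rewrite (TR (k - d)%nat y b1 vm). unfold S2. split.
    - intros h. exists (k - d)%nat. rewrite em. auto.
    - intros [k' [g1 g2]]. rewrite <- hb2 in g1. apply Nat2Z.inj, (sinc_inj r Hr) in g1.
      replace (k - d)%nat with k' by lia. auto. }
  destruct (isP_exists r Hr D N d q As ss HF hn HD hd (x' - b1)) as [ks' hP'].
  exists ks'. split; auto. rewrite <- hb2. f_equal. f_equal.
  destruct HF as [|a1 s1 As' ss' hs HF']; [simpl in hn; lia|].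
  destruct s1.
  - assert (HF0 := @Forall2_cons _ _ (sgnrel r) a1 true As' ss' hs HF'). unfold sgnrel in hs.
    assert (C := isP_CharP r Hr D N d q a1 As' _ HF0 HDm HD hd hs _ ks hP).
    assert (C' := isP_CharP r Hr D N d q a1 As' _ HF0 HDm HD hd hs _ ks' hP').
    apply (CharP_unique r Hr D N d q a1 As' _ HF0 HDm HD hd hs (x' - b1)); auto.
    fold k in C. destruct C as [hv [c1 c2]]. split; auto. split.
    + destruct c1 as [c1|c1]; [left|right; auto]. apply I0; auto. apply e0. apply I0; auto.
    + intros c3. apply c2. apply I1; auto. apply e1. apply I1; auto.
  - assert (HF0 := @Forall2_cons _ _ (sgnrel r) a1 false As' ss' hs HF'). unfold sgnrel in hs.
    assert (C := isP_CharN r Hr D N d q a1 As' _ HF0 HDm HD hd hs _ ks hP).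
    assert (C' := isP_CharN r Hr D N d q a1 As' _ HF0 HDm HD hd hs _ ks' hP').
    apply (CharN_unique r Hr D N d q a1 As' _ HF0 HDm HD hd hs (x' - b1)); auto.
    fold k in C. destruct C as [hv [c1 c2]]. split; auto. split.
    + apply I0; auto. apply e0. apply I0; auto.
    + destruct c2 as [c2|c2]; [left; auto|].
      destruct (classic (k = (N + length (a1 :: As') * D)%nat)) as [E|E]; [left; auto|right].
      intros c3. apply c2. apply I2; auto. apply e2. apply I2; auto.
Qed.

Lemma r_ge r (Hr : strictly_increasing r) k : (k <= r k)%nat.
Proof.
  induction k; [lia|]. assert (r k < r (S k))%nat by (apply Hr; lia). lia.
Qed.

Lemma r_mono r (Hr : strictly_increasing r) a b : (a <= b)%nat -> (r a <= r b)%nat.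
Proof. intros h. apply (sinc_le r Hr). auto. Qed.

Definition negl (a : list Z) : list Z := map Z.opp a.
Lemma op_at_neg r a : forall k, op_at r (negl a) k = - op_at r a k.
Proof. induction a; intros k; simpl; [lia|]. rewrite IHa. lia. Qed.

Fixpoint lsub (a b : list Z) : list Z :=
  match a, b with
  | x :: a', y :: b' => (x - y) :: lsub a' b'
  | _, [] => a
  | [], _ => negl b
  end.
Lemma op_at_lsub r a : forall b k, op_at r (lsub a b) k = op_at r a k - op_at r b k.
Proof.
  induction a as [|x a IH]; intros b k; destruct b as [|y b]; simpl; try lia.
  - rewrite op_at_neg. simpl. lia.
  - rewrite IH. lia.
Qed.

Definition dsh (a : list Z) : list Z := lsub (0 :: a) a.
Lemma op_at_dsh r a k : op_at r (dsh a) k = op_at r a (S k) - op_at r a k.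
Proof. unfold dsh. rewrite op_at_lsub. simpl. lia. Qed.

Lemma pos_neg_excl r a : op_pos r a -> op_neg r a -> False.
Proof. intros [K1 h1] [K2 h2]. assert (e1 := h1 (K1 + K2)%nat). assert (e2 := h2 (K1 + K2)%nat). lia. Qed.

Lemma zero_pos_excl r a : op_zero r a -> op_pos r a -> False.
Proof. intros h1 [K h2]. specialize (h2 K (le_n _)). rewrite h1 in h2. lia. Qed.

Lemma growth r (Hr : strictly_increasing r) (Hs : sparse r) :
  forall C : Z, exists G : nat, forall j, C * Z.of_nat (r j) < Z.of_nat (r (j + G)%nat).
Proof.
  intros C.
  destruct (Hs [-1; 1]) as [_ H2].
  assert (Hp : op_pos r [-1; 1]).
  { exists 0%nat. intros k _. cbn [op_at]. assert (r k < r (S k))%nat by (apply Hr; lia). lia. }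
  destruct (H2 Hp) as [D1 HD1].
  assert (Hstep : forall k, 2 * Z.of_nat (r k) < Z.of_nat (r (k + S D1)%nat)).
  { intros k. specialize (HD1 k). cbn [op_at] in HD1.
    replace (k + S D1)%nat with (S (k + D1)) by lia.
    pose proof (r_mono r Hr k (k + D1) ltac:(lia)). lia. }
  assert (Hit : forall t k, 2 ^ Z.of_nat (S t) * Z.of_nat (r k) < Z.of_nat (r (k + S t * S D1)%nat)).
  { induction t; intros k.
    - specialize (Hstep k). change (2 ^ Z.of_nat 1) with 2. replace (k + 1 * S D1)%nat with (k + S D1)%nat by lia. lia.
    - specialize (IHt k). specialize (Hstep (k + S t * S D1)%nat).
      replace (k + S (S t) * S D1)%nat with (k + S t * S D1 + S D1)%nat by lia.
      rewrite Nat2Z.inj_succ, Z.pow_succ_r by lia. nia. }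
  exists (S (Z.to_nat C) * S D1)%nat. intros j.
  specialize (Hit (Z.to_nat C) j).
  assert (Z.of_nat (S (Z.to_nat C)) <= 2 ^ Z.of_nat (S (Z.to_nat C))).
  { apply Z.lt_le_incl. apply Z.pow_gt_lin_r; lia. }
  assert (0 <= Z.of_nat (r j)) by lia.
  nia.
Qed.

Fixpoint sabs (a : list Z) : Z := match a with [] => 0 | c :: a' => Z.abs c + sabs a' end.
Lemma sabs_nonneg a : 0 <= sabs a.
Proof. induction a; simpl; lia. Qed.

Lemma op_at_bound r (Hr : strictly_increasing r) a : forall k L, (length a <= L)%nat ->
  Z.abs (op_at r a k) <= sabs a * Z.of_nat (r (k + L)%nat).
Proof.
  induction a as [|c a IH]; intros k L hl; simpl; [lia|].
  destruct L as [|L]; simpl in hl; [lia|].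
  specialize (IH (S k) L ltac:(lia)). replace (S k + L)%nat with (k + S L)%nat in IH by lia.
  pose proof (r_mono r Hr k (k + S L) ltac:(lia)).
  assert (Z.abs (c * Z.of_nat (r k)) <= Z.abs c * Z.of_nat (r (k + S L)%nat)).
  { rewrite Z.abs_mul. rewrite (Z.abs_eq (Z.of_nat _)) by lia. apply Z.mul_le_mono_nonneg_l; lia. }
  lia.
Qed.

Fixpoint sabsL (Cs : list (list Z)) : Z := match Cs with [] => 0 | a :: Cs' => sabs a + sabsL Cs' end.
Lemma sabsL_nonneg Cs : 0 <= sabsL Cs.
Proof. induction Cs; simpl; [lia|]. pose proof (sabs_nonneg a). lia. Qed.

Lemma dot_bound r (Hr : strictly_increasing r) Cs : forall t M L,
  (forall a, In a Cs -> (length a <= L)%nat) -> (forall x, In x t -> (x <= M)%nat) ->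
  Z.abs (dot r Cs t) <= sabsL Cs * Z.of_nat (r (M + L)%nat).
Proof.
  induction Cs as [|a Cs IH]; intros t M L hL hM; simpl; [lia|].
  destruct t as [|x t]; [pose proof (sabsL_nonneg Cs); pose proof (sabs_nonneg a); nia|].
  specialize (IH t M L (fun b hb => hL b (or_intror hb)) (fun y hy => hM y (or_intror hy))).
  pose proof (op_at_bound r Hr a x L (hL a (or_introl eq_refl))).
  pose proof (r_mono r Hr (x + L) (M + L) ltac:(specialize (hM x (or_introl eq_refl)); lia)).
  pose proof (sabs_nonneg a).
  assert (sabs a * Z.of_nat (r (x + L)%nat) <= sabs a * Z.of_nat (r (M + L)%nat)) by nia.
  lia.
Qed.

Lemma mono_pos r (Hr : strictly_increasing r) (Hs : sparse r) a : op_pos r a -> op_pos r (dsh a).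
Proof.
  intros hp.
  destruct (Hs (dsh a)) as [[Z0|[P0|N0]] _]; auto; exfalso.
  - assert (M : exists K, forall k, (K <= k)%nat -> op_at r a (S k) <= op_at r a k).
    { exists 0%nat. intros k _. specialize (Z0 k). rewrite op_at_dsh in Z0. lia. }
    clear Z0. revert M. intros M. destruct M as [K HK].
    destruct (Hs a) as [_ S2]. destruct (S2 hp) as [Da HDa].
    assert (B : forall k, (K <= k)%nat -> op_at r a k <= op_at r a K).
    { intros k hk. induction hk; [lia|]. specialize (HK m hk). lia. }
    set (k := (K + Z.to_nat (Z.abs (op_at r a K)))%nat).
    specialize (HDa k). specialize (B (k + Da)%nat ltac:(unfold k; lia)).
    pose proof (r_ge r Hr k). unfold k in *. lia.
  - destruct N0 as [K HK].
    assert (M : forall k, (K <= k)%nat -> op_at r a (S k) <= op_at r a k).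
    { intros k hk. specialize (HK k hk). rewrite op_at_dsh in HK. lia. }
    destruct (Hs a) as [_ S2]. destruct (S2 hp) as [Da HDa].
    assert (B : forall k, (K <= k)%nat -> op_at r a k <= op_at r a K).
    { intros k hk. induction hk; [lia|]. specialize (M m hk). lia. }
    set (k := (K + Z.to_nat (Z.abs (op_at r a K)))%nat).
    specialize (HDa k). specialize (B (k + Da)%nat ltac:(unfold k; lia)).
    pose proof (r_ge r Hr k). unfold k in *. lia.
Qed.

Lemma dom_pos r (Hr : strictly_increasing r) (Hs : sparse r) a : op_pos r a ->
  forall (C : Z) (L : nat), exists D0 : nat, forall D, (D0 <= D)%nat -> forall k k', (D0 <= k')%nat -> (k' < k)%nat ->
    C * Z.of_nat (r (k - D + L)%nat) < op_at r a k - op_at r a k'.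
Proof.
  intros hp C L.
  assert (hB := mono_pos r Hr Hs a hp).
  destruct hB as [K1 HK1].
  destruct (Hs (dsh a)) as [_ S2]. destruct (S2 (mono_pos r Hr Hs a hp)) as [DB HDB].
  destruct (growth r Hr Hs C) as [G HG].
  exists (K1 + DB + L + G + 1)%nat. intros D hD k k' hk' hlt.
  assert (Mono : forall x y, (K1 <= x)%nat -> (x <= y)%nat -> op_at r a x <= op_at r a y).
  { intros x y hx hxy. induction hxy; [lia|]. specialize (HK1 m ltac:(lia)). rewrite op_at_dsh in HK1. lia. }
  assert (e1 := Mono k' (k - 1)%nat ltac:(lia) ltac:(lia)).
  assert (e2 := HDB (k - 1 - DB)%nat). rewrite op_at_dsh in e2.
  replace (k - 1 - DB + DB)%nat with (k - 1)%nat in e2 by lia.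
  replace (S (k - 1)) with k in e2 by lia.
  assert (e3 := HG (k - D + L)%nat).
  assert (e4 := r_mono r Hr (k - D + L + G) (k - 1 - DB) ltac:(lia)).
  lia.
Qed.

Lemma dom_all r (Hr : strictly_increasing r) (Hs : sparse r) As :
  (forall a, In a As -> op_pos r a \/ op_neg r a) -> forall (C : Z) (L : nat),
  exists D0 : nat, forall a, In a As -> forall D, (D0 <= D)%nat -> forall k k', (D0 <= k')%nat -> (k' < k)%nat ->
    (op_pos r a -> C * Z.of_nat (r (k - D + L)%nat) < op_at r a k - op_at r a k') /\
    (op_neg r a -> C * Z.of_nat (r (k - D + L)%nat) < op_at r a k' - op_at r a k).
Proof.
  intros HA C L. induction As as [|a As IH].
  - exists 0%nat. intros a [].
  - destruct IH as [D1 H1]; [intros b hb; apply HA; right; auto|].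
    assert (Ha : exists Da, forall D, (Da <= D)%nat -> forall k k', (Da <= k')%nat -> (k' < k)%nat ->
      (op_pos r a -> C * Z.of_nat (r (k - D + L)%nat) < op_at r a k - op_at r a k') /\
      (op_neg r a -> C * Z.of_nat (r (k - D + L)%nat) < op_at r a k' - op_at r a k)).
    { destruct (HA a (or_introl eq_refl)) as [hp|hn].
      - destruct (dom_pos r Hr Hs a hp C L) as [Da HDa]. exists Da. intros D hD k k' hk hl. split.
        + intros _. apply HDa; auto.
        + intros hn. exfalso. apply (pos_neg_excl r a); auto.
      - assert (hp : op_pos r (negl a)).
        { destruct hn as [K HK]. exists K. intros k hk. rewrite op_at_neg. specialize (HK k hk). lia. }
        destruct (dom_pos r Hr Hs _ hp C L) as [Da HDa]. exists Da. intros D hD k k' hk hl. split.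
        + intros hp'. exfalso. apply (pos_neg_excl r a); auto.
        + intros _. specialize (HDa D hD k k' hk hl). rewrite !op_at_neg in HDa. lia. }
    destruct Ha as [Da HDa].
    exists (Nat.max Da D1). intros b [<-|hb] D hD k k' hk hl.
    + apply HDa; lia.
    + apply H1; auto; lia.
Qed.

Fixpoint maxlen (Cs : list (list Z)) : nat :=
  match Cs with [] => 0%nat | a :: Cs' => Nat.max (length a) (maxlen Cs') end.
Lemma maxlen_in Cs a : In a Cs -> (length a <= maxlen Cs)%nat.
Proof. induction Cs; simpl; intros H; [destruct H|]. destruct H as [<-|h]; [lia|]. specialize (IHCs h). lia. Qed.

Lemma sabsL_app a b : sabsL (a ++ b) = sabsL a + sabsL b.
Proof. induction a; simpl; lia. Qed.

Lemma DomH_from r (Hr : strictly_increasing r) (Hs : sparse r) As :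
  (forall a, In a As -> op_pos r a \/ op_neg r a) ->
  exists D0 : nat, forall D N, (D0 <= D)%nat -> DomH r D N As.
Proof.
  intros HA.
  set (L := maxlen As). set (S := sabsL As).
  destruct (dom_all r Hr Hs As HA (2 * S) L) as [D0 H0].
  exists D0. intros D N hD pre a Cs EAs h t h' t' hc hc' hl hl' hlt.
  assert (aIn : In a As) by (rewrite EAs; apply in_or_app; right; left; auto).
  assert (hh' : (D0 <= h')%nat).
  { pose proof (okc_all D N (h' :: t') hc' h' (or_introl eq_refl)). lia. }
  destruct (H0 a aIn D hD h h' hh' hlt) as [P1 P2].
  assert (CsIn : forall b, In b Cs -> (length b <= L)%nat).
  { intros b hb. apply maxlen_in. rewrite EAs. apply in_or_app. right. right. auto. }
  assert (B1 := dot_bound r Hr Cs t (h - D)%nat L CsIn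
    (fun x hx => ltac:(pose proof (okc_tail_bound D N h t hc x hx); lia))).
  assert (B2 := dot_bound r Hr Cs t' (h' - D)%nat L CsIn
    (fun x hx => ltac:(pose proof (okc_tail_bound D N h' t' hc' x hx); lia))).
  assert (SC : sabsL Cs <= S).
  { unfold S. rewrite EAs, sabsL_app. simpl. pose proof (sabsL_nonneg pre). pose proof (sabs_nonneg a). lia. }
  assert (R1 := r_mono r Hr (h' - D + L) (h - D + L) ltac:(lia)).
  assert (Cn := sabsL_nonneg Cs).
  set (X := Z.of_nat (r (h - D + L)%nat)) in *.
  set (X' := Z.of_nat (r (h' - D + L)%nat)) in *.
  assert (0 <= X') by (unfold X'; lia).
  assert (sabsL Cs * X' <= sabsL Cs * X) by (apply Z.mul_le_mono_nonneg_l; lia).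
  assert (sabsL Cs * X <= S * X) by (apply Z.mul_le_mono_nonneg_r; lia).
  cbn [dot]. split; intros hs; [specialize (P1 hs)|specialize (P2 hs)];
    apply Z.abs_le in B1; apply Z.abs_le in B2; lia.
Qed.

Lemma signs_exist r (Hs : sparse r) As : (forall a, In a As -> ~ op_zero r a) ->
  exists ss, Forall2 (sgnrel r) As ss.
Proof.
  induction As as [|a As IH]; intros H.
  - exists []. constructor.
  - destruct IH as [ss hss]; [intros b hb; apply H; right; auto|].
    destruct (Hs a) as [[hz|[hp|hn]] _].
    + exfalso. apply (H a (or_introl eq_refl)). auto.
    + exists (true :: ss). constructor; auto.
    + exists (false :: ss). constructor; auto.
Qed.

Lemma sgn_or r As ss : Forall2 (sgnrel r) As ss -> forall a, In a As -> op_pos r a \/ op_neg r a.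
Proof.
  induction 1; intros b hb; [destruct hb|]. destruct hb as [<-|hb]; auto. destruct y; [left|right]; auto.
Qed.

Theorem mainTheorem16 :
  forall r : nat -> nat,
    strictly_increasing r ->
    congruence_periodic r ->
    sparse r ->
  forall d : nat, (1 <= d)%nat ->
  forall N : nat,  (* R~ = { r_{N + d t} : t in N } *)
  forall n : nat, (1 <= n)%nat ->
  forall As : list (list Z), length As = n ->
    (forall a, In a As -> ~ op_zero r a) ->
  exists Delta0 : nat,
    forall Delta : nat, (Delta0 <= Delta)%nat -> (exists q : nat, Delta = (d * q)%nat) ->
      has_strong_honest_def r (phiP r N d n Delta As).
Proof.
  intros r Hr _ Hs d hd N n hn As hl Hnz.
  destruct (signs_exist r Hs As Hnz) as [ss HF].
  destruct (DomH_from r Hr Hs As (sgn_or r As ss HF)) as [D0 HD0].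
  exists D0. intros D hD [q hq]. subst n.
  assert (HA : As <> []) by (destruct As; simpl in hn; [lia|discriminate]).
  assert (HDm := HD0 D N hD).
  apply (honest3 r _ (QP D N As 0) (QP D N As d) (QM D N As d)
           (S0 r D N As) (S1 r D N d As) (S2 r D N d As)).
  - intros e vx vc1 vc2 b h1 h2 h3. rewrite (QP_sem r Hr); auto. unfold S0. reflexivity.
  - intros e vx vc1 vc2 b h1 h2 h3. rewrite (QP_sem r Hr); auto. unfold S1. reflexivity.
  - intros e vx vc1 vc2 b h1 h2 h3. rewrite (QM_sem r Hr); auto. unfold S2. reflexivity.
  - intros x x' b1 b2 hx [k [g1 [ks [f1 [f2 [f3 f4]]]]]]. exists k. split; auto.
    exists ks. repeat split; auto. lia.
  - intros x x' b1 b2 hx [k [g1 [ks [f1 [f2 [f3 f4]]]]]]. exists k. split; auto.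
    exists ks. repeat split; auto. lia.
  - intros x x' b1 b2 hx [k [g1 [ks [f1 [f2 [f3 f4]]]]]]. exists k. split; auto.
    exists ks. repeat split; auto. lia.
  - intros x x' b1 b2 e0 e1 e2. split.
    + apply (phi_det_dir r Hr D N d q As ss HF HDm hn hq hd); auto.
    + apply (phi_det_dir r Hr D N d q As ss HF HDm hn hq hd); symmetry; auto.
Qed.
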